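(* Let $s,\alpha\in\mathbb{R}$ with $s+\alpha\ge0$, $\alpha<3/4$ and $s>-3/4$. Then for every $t\in\mathbb{R}$ the bilinear operator $B_2$ defined in the context maps $\dot H^s\times\dot H^s$ into $\dot H^{s+\alpha}$ and satisfies $$\|B_2(u,v)\|_{\dot H^{s+\alpha}}\le c_2'(s,\alpha)\|u\|_{\dot H^s}\|v\|_{\dot H^s},$$ with a constant $c_2'(s,\alpha)$ depending only on $s,\alpha$.
   Context: Write $\mathbb{Z}_0=\mathbb{Z}\setminus\{0\}$. For $s\in\mathbb{R}$, $\dot H^s$ denotes the Hilbert space of complex sequences $v=(v_k)_{k\in\mathbb{Z}_0}$ with $\|v\|_{\dot H^s}^2=\sum_{k\in\mathbb{Z}_0}|k|^{2s}|v_k|^2<\infty$. For $t\in\mathbb{R}$, $$B_2(u,v)_k=\sum_{k_1+k_2=k,\ k_1,k_2\in\mathbb{Z}_0}\frac{e^{3ikk_1k_2t}u_{k_1}v_{k_2}}{k_1k_2},\qquad k\in\mathbb{Z}_0.$$ *)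

(* Defs.v *)
From Stdlib Require Import Reals ZArith.
From Coquelicot Require Import Coquelicot.
Open Scope R_scope.

Definition zsummable (f : Z -> R) : Prop :=
  ex_series (fun n : nat => Rabs (f (Z.of_nat n))) /\
  ex_series (fun n : nat => Rabs (f (- Z.of_nat (S n))%Z)).

Definition zsum (f : Z -> R) : R :=
  Series (fun n : nat => f (Z.of_nat n)) +
  Series (fun n : nat => f (- Z.of_nat (S n))%Z).

(* Sequences indexed by Z_0 are modelled as v : Z -> C; the value v 0 is
   ignored everywhere (all sums below exclude the index 0). *)

Definition hterm (s : R) (v : Z -> C) (k : Z) : R :=
  if Z.eq_dec k 0 then 0
  else Rpower (Rabs (IZR k)) (2 * s) * (Cmod (v k)) ^ 2.

Definition In_Hs (s : R) (v : Z -> C) : Prop := zsummable (hterm s v).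

Definition Hnorm (s : R) (v : Z -> C) : R := sqrt (zsum (hterm s v)).

Definition Cexpi (theta : R) : C := (cos theta, sin theta).

Definition b2term (t : R) (u v : Z -> C) (k k1 : Z) : C :=
  let k2 := (k - k1)%Z in
  if Z.eq_dec k1 0 then RtoC 0
  else if Z.eq_dec k2 0 then RtoC 0
  else Cdiv (Cmult (Cmult (Cexpi (3 * IZR k * IZR k1 * IZR k2 * t)) (u k1)) (v k2))
            (RtoC (IZR k1 * IZR k2)).

Definition B2 (t : R) (u v : Z -> C) (k : Z) : C :=
  (zsum (fun k1 => fst (b2term t u v k k1)), zsum (fun k1 => snd (b2term t u v k k1))).

(* Main.v *)
Require Import Defs.
From Stdlib Require Import Reals ZArith Lra Lia.
From Coquelicot Require Import Coquelicot.
Open Scope R_scope.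

Fixpoint FS (g : Z -> R) (m : Z) (L : nat) : R :=
  match L with O => 0 | S L' => g m + FS g (m + 1)%Z L' end.

Lemma FS_add g L1 : forall m L2,
  FS g m (L1 + L2) = FS g m L1 + FS g (m + Z.of_nat L1)%Z L2.
Proof.
  induction L1 as [|L1 IH]; intros m L2; simpl.
  - rewrite Z.add_0_r; lra.
  - rewrite IH. replace (m + 1 + Z.of_nat L1)%Z with (m + Z.pos (Pos.of_succ_nat L1))%Z by lia. lra.
Qed.

Lemma FS_nonneg g m L : (forall k, 0 <= g k) -> 0 <= FS g m L.
Proof. intros H; revert m; induction L; intros m; simpl; [lra|]. specialize (H m); specialize (IHL (m+1)%Z); lra. Qed.

Lemma FS_le f g m L : (forall k, f k <= g k) -> FS f m L <= FS g m L.
Proof. intros H; revert m; induction L; intros m; simpl; [lra|]. specialize (H m); specialize (IHL (m+1)%Z); lra. Qed.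

Lemma FS_ext f g m L : (forall k, f k = g k) -> FS f m L = FS g m L.
Proof. intros H; revert m; induction L; intros m; simpl; [lra|]. rewrite H, IHL; lra. Qed.

Lemma FS_plus f g m L : FS (fun k => f k + g k) m L = FS f m L + FS g m L.
Proof. revert m; induction L; intros m; simpl; [lra|]. rewrite IHL; lra. Qed.

Lemma FS_scal c f m L : FS (fun k => c * f k) m L = c * FS f m L.
Proof. revert m; induction L; intros m; simpl; [lra|]. rewrite IHL; lra. Qed.

Lemma FS_shift g c m L : FS (fun j => g (j + c)%Z) m L = FS g (m + c)%Z L.
Proof. revert m; induction L; intros m; simpl; [lra|]. rewrite IHL.
  replace (m + 1 + c)%Z with (m + c + 1)%Z by lia; lra. Qed.

Lemma FS_mono g m L m' L' : (forall k, 0 <= g k) ->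
  (m' <= m)%Z -> (m + Z.of_nat L <= m' + Z.of_nat L')%Z -> FS g m L <= FS g m' L'.
Proof.
  intros Hg H1 H2.
  set (a := Z.to_nat (m - m')).
  set (b := (L' - a - L)%nat).
  assert (HL' : L' = (a + (L + b))%nat) by (unfold b, a; lia).
  rewrite HL', FS_add, FS_add.
  replace (m' + Z.of_nat a)%Z with m by (unfold a; lia).
  pose proof (FS_nonneg g m' a Hg). pose proof (FS_nonneg g (m + Z.of_nat L) b Hg). lra.
Qed.

Lemma sum_n_pos (g : Z -> R) N : sum_n (fun n => g (Z.of_nat n)) N = FS g 0 (S N).
Proof.
  induction N.
  - rewrite sum_O; simpl; lra.
  - rewrite sum_Sn, IHN. replace (S (S N)) with (S N + 1)%nat by lia.
    rewrite FS_add; simpl. unfold plus; simpl. lra.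
Qed.

Lemma sum_n_neg (g : Z -> R) N : sum_n (fun n => g (- Z.of_nat (S n))%Z) N = FS g (- Z.of_nat (S N))%Z (S N).
Proof.
  induction N.
  - rewrite sum_O; cbn [FS]. replace (- Z.of_nat 1)%Z with (-1)%Z by lia. lra.
  - rewrite sum_Sn, IHN. unfold plus; cbn [FS].
    replace (- Z.of_nat (S (S N)) + 1)%Z with (- Z.of_nat (S N))%Z by lia.
    apply Rplus_comm.
Qed.

Definition PS (g : Z -> R) (N : nat) := FS g (- Z.of_nat (S N))%Z (S N + S N).

Lemma PS_split (g : Z -> R) N : PS g N = sum_n (fun n => g (Z.of_nat n)) N + sum_n (fun n => g (- Z.of_nat (S n))%Z) N.
Proof.
  unfold PS. rewrite FS_add, sum_n_pos, sum_n_neg.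
  replace (- Z.of_nat (S N) + Z.of_nat (S N))%Z with 0%Z by lia. lra.
Qed.

Lemma sum_n_le_Series (a : nat -> R) N : (forall n, 0 <= a n) -> ex_series a -> sum_n a N <= Series a.
Proof.
  intros Ha He. rewrite (Series_incr_n a (S N)) by (lia || auto).
  rewrite sum_n_Reals. simpl.
  assert (0 <= Series (fun k => a (S N + k)%nat)).
  { pose proof (Series_scal_l 0 (fun k => a (S N + k)%nat)) as E.
    rewrite Rmult_0_l in E. rewrite <- E.
    apply Series_le. intros; split; [lra| rewrite Rmult_0_l; apply Ha]. apply ex_series_incr_n; auto. }
  clear -H. 
  replace (Series (fun k => a (S N + k)%nat)) with (Series (fun k : nat => a (S (N + k))%nat)) in H by reflexivity.
  lra.
Qed.

Lemma bounded_series (a : nat -> R) B : (forall n, 0 <= a n) -> (forall N, sum_n a N <= B) ->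
  ex_series a.
Proof.
  intros Ha HB. destruct (ex_finite_lim_seq_incr (sum_n a) B) as [l Hl].
  - intros n. rewrite sum_Sn. unfold plus; simpl. specialize (Ha (S n)); lra.
  - auto.
  - exists l. exact Hl.
Qed.

Lemma zsum_bound g B : (forall k, 0 <= g k) -> (forall N, PS g N <= B) ->
  zsummable g /\ zsum g <= B.
Proof.
  intros Hg HB.
  assert (Hp : forall N, sum_n (fun n => g (Z.of_nat n)) N <= B).
  { intros N. specialize (HB N). rewrite PS_split in HB.
    assert (0 <= sum_n (fun n => g (- Z.of_nat (S n))%Z) N).
    { rewrite sum_n_neg. apply FS_nonneg; auto. } lra. }
  assert (Hn : forall N, sum_n (fun n => g (- Z.of_nat (S n))%Z) N <= B).
  { intros N. specialize (HB N). rewrite PS_split in HB.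
    assert (0 <= sum_n (fun n => g (Z.of_nat n)) N).
    { rewrite sum_n_pos. apply FS_nonneg; auto. } lra. }
  assert (E1 : ex_series (fun n => g (Z.of_nat n))) by (apply (bounded_series _ B); auto).
  assert (E2 : ex_series (fun n => g (- Z.of_nat (S n))%Z)) by (apply (bounded_series _ B); auto).
  split.
  - split; eapply ex_series_ext; [| exact E1 | | exact E2]; intros n; simpl;
      rewrite Rabs_pos_eq; auto.
  - unfold zsum.
    assert (L := is_lim_seq_plus' _ _ _ _ (Series_correct _ E1) (Series_correct _ E2)).
    assert (Hle := is_lim_seq_le _ (fun _ => B) _ B (fun N => eq_ind _ (fun x => x <= B) (HB N) _ (PS_split g N)) L (is_lim_seq_const B)).
    simpl in Hle. exact Hle.
Qed.

Lemma zs_pos g : zsummable g -> ex_series (fun n => g (Z.of_nat n)).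
Proof. intros [H _]. apply ex_series_Rabs; auto. Qed.
Lemma zs_neg g : zsummable g -> ex_series (fun n => g (- Z.of_nat (S n))%Z).
Proof. intros [_ H]. apply ex_series_Rabs; auto. Qed.

Lemma PS_le_zsum g N : (forall k, 0 <= g k) -> zsummable g -> PS g N <= zsum g.
Proof.
  intros Hg Hs. rewrite PS_split. unfold zsum.
  pose proof (sum_n_le_Series _ N (fun n => Hg _) (zs_pos _ Hs)).
  pose proof (sum_n_le_Series _ N (fun n => Hg _) (zs_neg _ Hs)). lra.
Qed.

Lemma FS_le_zsum g m L : (forall k, 0 <= g k) -> zsummable g -> FS g m L <= zsum g.
Proof.
  intros Hg Hs. set (N := (Z.to_nat (Z.abs m) + L)%nat).
  apply Rle_trans with (PS g N); [| apply PS_le_zsum; auto].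
  unfold PS. apply FS_mono; auto; unfold N; lia.
Qed.

Lemma zsum_shift g c : (forall k, 0 <= g k) -> zsummable g ->
  zsummable (fun j => g (j + c)%Z) /\ zsum (fun j => g (j + c)%Z) <= zsum g.
Proof.
  intros Hg Hs. apply zsum_bound; [intros; auto|].
  intros N. unfold PS. rewrite FS_shift. apply FS_le_zsum; auto.
Qed.

Lemma ex_series_R_le (a b : nat -> R) : (forall n, Rabs (a n) <= b n) -> ex_series b -> ex_series a.
Proof. intros H Hb. apply (ex_series_le a b); auto. Qed.

Lemma zsummable_le f g : (forall k, Rabs (f k) <= g k) -> zsummable g -> zsummable f.
Proof.
  intros H [H1 H2]. split.
  - apply (ex_series_R_le _ (fun n => Rabs (g (Z.of_nat n)))); auto.
    intros n. rewrite Rabs_Rabsolu. eapply Rle_trans; [apply H| apply Rle_abs].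
  - apply (ex_series_R_le _ (fun n => Rabs (g (- Z.of_nat (S n))%Z))); auto.
    intros n. rewrite Rabs_Rabsolu. eapply Rle_trans; [apply H| apply Rle_abs].
Qed.

Lemma zsummable_plus f g : zsummable f -> zsummable g -> zsummable (fun k => f k + g k).
Proof.
  intros [F1 F2] [G1 G2]. split.
  - apply (ex_series_R_le _ (fun n => Rabs (f (Z.of_nat n)) + Rabs (g (Z.of_nat n)))).
    + intros n. rewrite Rabs_Rabsolu. apply Rabs_triang.
    + apply (ex_series_plus _ _ F1 G1).
  - apply (ex_series_R_le _ (fun n => Rabs (f (- Z.of_nat (S n))%Z) + Rabs (g (- Z.of_nat (S n))%Z))).
    + intros n. rewrite Rabs_Rabsolu. apply Rabs_triang.
    + apply (ex_series_plus _ _ F2 G2).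
Qed.

Lemma zsummable_scal c f : zsummable f -> zsummable (fun k => c * f k).
Proof.
  intros [F1 F2]. split.
  - apply (ex_series_R_le _ (fun n => Rabs c * Rabs (f (Z.of_nat n)))).
    + intros n. rewrite Rabs_Rabsolu, Rabs_mult. lra.
    + apply (ex_series_scal_l (Rabs c) _ F1).
  - apply (ex_series_R_le _ (fun n => Rabs c * Rabs (f (- Z.of_nat (S n))%Z))).
    + intros n. rewrite Rabs_Rabsolu, Rabs_mult. lra.
    + apply (ex_series_scal_l (Rabs c) _ F2).
Qed.

Lemma zsum_plus f g : zsummable f -> zsummable g -> zsum (fun k => f k + g k) = zsum f + zsum g.
Proof.
  intros Hf Hg. unfold zsum.
  rewrite (Series_plus _ _ (zs_pos _ Hf) (zs_pos _ Hg)).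
  rewrite (Series_plus _ _ (zs_neg _ Hf) (zs_neg _ Hg)). lra.
Qed.

Lemma zsum_scal c f : zsum (fun k => c * f k) = c * zsum f.
Proof. unfold zsum. rewrite !Series_scal_l. lra. Qed.

Lemma zsum_ext f g : (forall k, f k = g k) -> zsum f = zsum g.
Proof. intros H. unfold zsum. rewrite (Series_ext _ _ (fun n => H _)), (Series_ext _ _ (fun n => H (- Z.of_nat (S n))%Z)). reflexivity. Qed.

Lemma zsummable_ext f g : (forall k, f k = g k) -> zsummable f -> zsummable g.
Proof. intros H [H1 H2]. split; [eapply ex_series_ext; [|exact H1]|eapply ex_series_ext; [|exact H2]]; intros n; simpl; rewrite H; reflexivity. Qed.

Lemma zsummable_abs f : zsummable f -> zsummable (fun k => Rabs (f k)).
Proof. intros [H1 H2]. split; [eapply ex_series_ext; [|exact H1]|eapply ex_series_ext; [|exact H2]]; intros n; simpl; rewrite Rabs_Rabsolu; reflexivity. Qed.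

Lemma zsum_nonneg g : (forall k, 0 <= g k) -> zsummable g -> 0 <= zsum g.
Proof. intros Hg Hs. pose proof (PS_le_zsum g 0 Hg Hs). pose proof (FS_nonneg g (- Z.of_nat 1)%Z (1+1) Hg). unfold PS in H. lra. Qed.

Lemma zsum_le f g : zsummable f -> zsummable g -> (forall k, f k <= g k) -> zsum f <= zsum g.
Proof.
  intros Hf Hg H.
  assert (Hd : zsummable (fun k => g k + (-1) * f k)) by (apply zsummable_plus; auto; apply zsummable_scal; auto).
  assert (Hp : forall k, 0 <= g k + (-1) * f k) by (intros k; specialize (H k); lra).
  pose proof (zsum_nonneg _ Hp Hd) as N.
  rewrite zsum_plus, zsum_scal in N; auto. lra. apply zsummable_scal; auto.
Qed.

Lemma FS_zero m L : FS (fun _ => 0) m L = 0.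
Proof. revert m; induction L; intros; simpl; [lra|]. rewrite IHL; lra. Qed.

Lemma zsum_FS (H : Z -> Z -> R) m L : (forall k, zsummable (H k)) ->
  zsummable (fun k1 => FS (fun k => H k k1) m L) /\
  zsum (fun k1 => FS (fun k => H k k1) m L) = FS (fun k => zsum (H k)) m L.
Proof.
  intros Hs. revert m; induction L; intros m; simpl.
  - split. apply (zsum_bound (fun _ => 0) 0). intros; lra. intros N; unfold PS; rewrite FS_zero; lra.
    transitivity (0 * zsum (fun _ => 0)); [rewrite <- zsum_scal; apply zsum_ext; intros; lra | lra].
  - destruct (IHL (m+1)%Z) as [S1 E1]. split.
    + apply zsummable_plus; auto.
    + rewrite zsum_plus, E1; auto.
Qed.

Lemma tele x g : 1 <= x -> 0 < g ->
  g * Rpower (x + 1) (- (g + 1)) <= Rpower x (- g) - Rpower (x + 1) (- g).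
Proof.
  intros Hx Hg. unfold Rpower. set (y := x + 1).
  assert (Hy : 0 < y) by (unfold y; lra).
  set (E := exp (- g * ln y)). assert (HE : 0 < E) by apply exp_pos.
  assert (H1 : exp (- (g + 1) * ln y) = E * / y).
  { replace (- (g + 1) * ln y) with (- g * ln y + - (ln y)) by ring.
    rewrite exp_plus, exp_Ropp, exp_ln; auto. }
  set (D := ln y - ln x).
  assert (H2 : exp (- g * ln x) = E * exp (g * D)).
  { unfold E, D. rewrite <- exp_plus. f_equal. ring. }
  assert (H3 := exp_ineq1_le (g * D)).
  assert (H4 : / y <= D).
  { pose proof (exp_ineq1_le (ln x - ln y)) as H.
    unfold Rminus in H. rewrite exp_plus, exp_Ropp, !exp_ln in H by lra.
    unfold D. assert (x * / y = 1 - / y).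
    { unfold y. field. lra. } lra. }
  rewrite H1, H2.
  assert (E * (1 + g * D) <= E * exp (g * D)) by (apply Rmult_le_compat_l; lra).
  assert (g * / y <= g * D) by (apply Rmult_le_compat_l; lra).
  assert (E * (g * / y) <= E * (g * D)) by (apply Rmult_le_compat_l; lra).
  nra.
Qed.

Definition gz (q : R) (n : Z) : R :=
  if Z.eq_dec n 0 then 0 else Rpower (Rabs (IZR n)) (- q).

Lemma gz_nonneg q n : 0 <= gz q n.
Proof. unfold gz. destruct Z.eq_dec; [lra|]. unfold Rpower. left; apply exp_pos. Qed.

Lemma gz_pos q k : gz q (Z.of_nat (S k)) = Rpower (INR k + 1) (- q).
Proof.
  unfold gz. destruct Z.eq_dec; [lia|]. rewrite <- INR_IZR_INZ, S_INR, Rabs_pos_eq; auto.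
  pose proof (pos_INR k); lra.
Qed.

Lemma gz_neg q k : gz q (- Z.of_nat (S k))%Z = Rpower (INR k + 1) (- q).
Proof.
  unfold gz. destruct Z.eq_dec; [lia|]. rewrite opp_IZR, Rabs_Ropp, <- INR_IZR_INZ, S_INR, Rabs_pos_eq; auto.
  pose proof (pos_INR k); lra.
Qed.

Lemma Rpow1b y : Rpower 1 y = 1.
Proof. unfold Rpower. rewrite ln_1, Rmult_0_r, exp_0. reflexivity. Qed.

Lemma b_partial q N : 1 < q ->
  sum_n (fun n => Rpower (INR n + 1) (- q)) N <= 1 + / (q - 1) * (1 - Rpower (INR N + 1) (- (q - 1))).
Proof.
  intros Hq. induction N.
  - rewrite sum_O. simpl. rewrite Rplus_0_l, !Rpow1b, Rminus_diag, Rmult_0_r. lra.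
  - rewrite sum_Sn. unfold plus. change (AbelianMonoid.plus _ _ ?a ?b) with (a + b).
    pose proof (tele (INR N + 1) (q - 1) ltac:(pose proof (pos_INR N); lra) ltac:(lra)) as T.
    rewrite S_INR. replace (- (q - 1 + 1)) with (- q) in T by ring.
    assert (/ (q - 1) * ((q - 1) * Rpower (INR N + 1 + 1) (- q)) = Rpower (INR N + 1 + 1) (- q)) by (field; lra).
    assert (0 < / (q-1)) by (apply Rinv_0_lt_compat; lra).
    assert (/ (q - 1) * ((q - 1) * Rpower (INR N + 1 + 1) (- q)) <= / (q - 1) * (Rpower (INR N + 1) (- (q - 1)) - Rpower (INR N + 1 + 1) (- (q - 1)))) by (apply Rmult_le_compat_l; lra).
    nra.
Qed.

Lemma sum_shift_pos q N : sum_n (fun n => gz q (Z.of_nat n)) (S N) = sum_n (fun n => Rpower (INR n + 1) (- q)) N.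
Proof.
  induction N.
  - rewrite sum_Sn, !sum_O. unfold plus. change (AbelianMonoid.plus _ _ ?a ?b) with (a + b).
    rewrite gz_pos. unfold gz; destruct Z.eq_dec; [|simpl in n; lia]. lra.
  - rewrite sum_Sn, IHN, (sum_Sn _ N). unfold plus. change (AbelianMonoid.plus _ _ ?a ?b) with (a + b).
    rewrite gz_pos, S_INR. reflexivity.
Qed.

Lemma gz_summable q : 1 < q -> zsummable (gz q) /\ zsum (gz q) <= 2 * (1 + / (q - 1)).
Proof.
  intros Hq. apply zsum_bound; [apply gz_nonneg|]. intros N. rewrite PS_split.
  assert (Hb := b_partial q N Hq).
  assert (0 < Rpower (INR N + 1) (- (q - 1))) by (unfold Rpower; apply exp_pos).
  assert (0 < / (q-1)) by (apply Rinv_0_lt_compat; lra).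
  assert (/ (q - 1) * (1 - Rpower (INR N + 1) (- (q - 1))) <= / (q-1)) by nra.
  assert (E1 : sum_n (fun n => gz q (- Z.of_nat (S n))%Z) N = sum_n (fun n => Rpower (INR n + 1) (- q)) N).
  { apply sum_n_ext. intros; apply gz_neg. }
  assert (E2 : sum_n (fun n => gz q (Z.of_nat n)) N <= sum_n (fun n => gz q (Z.of_nat n)) (S N)).
  { rewrite (sum_Sn _ N). unfold plus. change (AbelianMonoid.plus _ _ ?a ?b) with (a + b).
    pose proof (gz_nonneg q (Z.of_nat (S N))). lra. }
  rewrite sum_shift_pos in E2. lra.
Qed.

Lemma Rpower_pos x y : 0 < Rpower x y.
Proof. unfold Rpower; apply exp_pos. Qed.

Lemma cs_real Z W G : 0 <= Z -> 0 <= W -> 0 <= G ->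
  (forall l, 0 < l -> Z <= l / 2 * W + G / (2 * l)) -> Z ^ 2 <= W * G.
Proof.
  intros HZ HW HG H.
  destruct (Req_dec W 0) as [W0|W0].
  - subst W. destruct (Req_dec Z 0) as [Z0|Z0]; [subst; lra|].
    assert (0 < Z) by lra. specialize (H ((G + 1) / Z) ltac:(apply Rdiv_lt_0_compat; lra)).
    replace (G / (2 * ((G + 1) / Z))) with (Z * (G / (2 * (G + 1)))) in H by (field; lra).
    assert (G / (2 * (G+1)) < 1). { apply Rmult_lt_reg_r with (2 * (G + 1)); [lra|].
      unfold Rdiv; rewrite Rmult_assoc, Rinv_l by lra. lra. }
    nra.
  - destruct (Req_dec G 0) as [G0|G0].
    + subst G. destruct (Req_dec Z 0) as [Z0|Z0]; [subst; lra|].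
      assert (0 < Z) by lra. specialize (H (Z / (W + 1)) ltac:(apply Rdiv_lt_0_compat; lra)).
      replace (0 / (2 * (Z / (W + 1)))) with 0 in H by (field; lra).
      replace (Z / (W + 1) / 2 * W) with (Z * (W / (2 * (W + 1)))) in H by (field; lra).
      assert (W / (2 * (W+1)) < 1). { apply Rmult_lt_reg_r with (2 * (W + 1)); [lra|].
        unfold Rdiv; rewrite Rmult_assoc, Rinv_l by lra. lra. }
      nra.
    + assert (0 < sqrt W) by (apply sqrt_lt_R0; lra).
      assert (0 < sqrt G) by (apply sqrt_lt_R0; lra).
      specialize (H (sqrt G / sqrt W) ltac:(apply Rdiv_lt_0_compat; lra)).
      pose proof (sqrt_sqrt W HW) as SW. pose proof (sqrt_sqrt G HG) as SG.
      replace (sqrt G / sqrt W / 2 * W + G / (2 * (sqrt G / sqrt W))) with (sqrt G * sqrt W) in H.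
      2:{ assert (Id : forall a b, 0 < a -> 0 < b -> b / a / 2 * (a * a) + (b * b) / (2 * (b / a)) = b * a)
            by (intros; field; lra).
          set (a := sqrt W) in *. set (b := sqrt G) in *. rewrite <- SW, <- SG. rewrite Id; auto. }
      assert (Hz : Z ^ 2 <= (sqrt G * sqrt W) ^ 2) by (apply pow_incr; lra).
      replace ((sqrt G * sqrt W) ^ 2) with (G * W) in Hz by (set (a := sqrt W) in *; set (b := sqrt G) in *; rewrite <- SW, <- SG; ring). lra.
Qed.

Lemma amgm_sq X w h l : 0 <= X -> 0 <= w -> 0 <= h -> 0 < l -> X ^ 2 = w * h ->
  X <= l / 2 * w + h / (2 * l).
Proof.
  intros HX Hw Hh Hl E.
  assert (2 * l * X <= l * l * w + h).
  { assert (0 <= (l * l * w - h) ^ 2) by apply pow2_ge_0.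
    assert ((2 * l * X) ^ 2 <= (l * l * w + h) ^ 2) by nra.
    assert (0 <= l * l * w + h) by nra.
    destruct (Rle_dec (2 * l * X) (l * l * w + h)); [auto|].
    assert ((l * l * w + h) ^ 2 < (2 * l * X) ^ 2) by (simpl; nra). lra. }
  replace (l / 2 * w + h / (2 * l)) with ((l * l * w + h) / (2 * l)) by (field; lra).
  apply Rmult_le_reg_r with (2 * l); [lra|]. unfold Rdiv. rewrite Rmult_assoc, Rinv_l by lra. lra.
Qed.

Lemma cs2 X Y a c : X * a + Y * c <= sqrt (X ^ 2 + Y ^ 2) * sqrt (a ^ 2 + c ^ 2).
Proof.
  rewrite <- sqrt_mult by nra.
  destruct (Rle_dec (X * a + Y * c) 0); [pose proof (sqrt_pos ((X ^ 2 + Y ^ 2) * (a ^ 2 + c ^ 2))); lra|].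
  rewrite <- (sqrt_pow2 (X * a + Y * c)) by lra. apply sqrt_le_1_alt.
  assert (0 <= (X * c - Y * a) ^ 2) by apply pow2_ge_0. nra.
Qed.

Lemma p2_half x y z b r : 1 <= y -> y <= x -> 0 < z -> z <= x + y -> 0 <= b -> 0 < r ->
  Rpower z (2 * b) * (Rpower x (- (2 * (r + b))) * Rpower y (- (2 * (r + b))))
  <= Rpower 2 (2 * b) * (Rpower x (- (4 * r)) + Rpower y (- (4 * r))).
Proof.
  intros Hy Hxy Hz Hzxy Hb Hr.
  assert (A1 : Rpower z (2 * b) <= Rpower 2 (2 * b) * Rpower x (2 * b)).
  { rewrite Rpower_mult_distr by lra. apply Rle_Rpower_l; lra. }
  assert (A2 : Rpower x (2 * b) * Rpower x (- (2 * (r + b))) = Rpower x (- (2 * r))).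
  { rewrite <- Rpower_plus. f_equal; ring. }
  assert (A3 : Rpower y (- (2 * (r + b))) <= Rpower y (- (2 * r))).
  { apply Rle_Rpower; lra. }
  assert (A4 : Rpower x (- (2 * r)) <= Rpower y (- (2 * r))).
  { rewrite !Rpower_Ropp. apply Rinv_le_contravar. apply Rpower_pos. apply Rle_Rpower_l; lra. }
  assert (A5 : Rpower y (- (2 * r)) * Rpower y (- (2 * r)) = Rpower y (- (4 * r))).
  { rewrite <- Rpower_plus. f_equal; ring. }
  pose proof (Rpower_pos z (2*b)). pose proof (Rpower_pos 2 (2*b)). pose proof (Rpower_pos x (2*b)).
  pose proof (Rpower_pos x (- (2 * (r + b)))). pose proof (Rpower_pos y (- (2 * (r + b)))).
  pose proof (Rpower_pos x (- (2 * r))). pose proof (Rpower_pos y (- (2 * r))).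
  pose proof (Rpower_pos x (- (4 * r))).
  set (K := Rpower 2 (2 * b)) in *.
  apply Rle_trans with (K * Rpower x (2 * b) * (Rpower x (- (2 * (r + b))) * Rpower y (- (2 * (r + b))))).
  { apply Rmult_le_compat_r; [nra|lra]. }
  replace (K * Rpower x (2 * b) * (Rpower x (- (2 * (r + b))) * Rpower y (- (2 * (r + b)))))
    with (K * (Rpower x (2 * b) * Rpower x (- (2 * (r + b)))) * Rpower y (- (2 * (r + b)))) by ring.
  rewrite A2. rewrite <- A5 in *.
  apply Rle_trans with (K * (Rpower y (- (2 * r)) * Rpower y (- (2 * r)))); [|nra].
  rewrite <- Rmult_assoc. apply Rmult_le_compat; try nra.
Qed.

Lemma p2_real x y z b r : 1 <= x -> 1 <= y -> 0 < z -> z <= x + y -> 0 <= b -> 0 < r ->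
  Rpower z (2 * b) * (Rpower x (- (2 * (r + b))) * Rpower y (- (2 * (r + b))))
  <= Rpower 2 (2 * b) * (Rpower x (- (4 * r)) + Rpower y (- (4 * r))).
Proof.
  intros. destruct (Rle_dec y x).
  - apply p2_half; lra.
  - rewrite (Rmult_comm (Rpower x _)), (Rplus_comm (Rpower x _)). apply p2_half; lra.
Qed.

Lemma IZR_abs_ge1 k : k <> 0%Z -> 1 <= Rabs (IZR k).
Proof. intros. rewrite <- abs_IZR. apply IZR_le. lia. Qed.

Lemma Cmod_Cexpi th : Cmod (Cexpi th) = 1.
Proof.
  unfold Cmod, Cexpi; simpl.
  pose proof (sin2_cos2 th) as H. unfold Rsqr in H.
  replace (cos th * (cos th * 1) + sin th * (sin th * 1)) with 1 by lra. apply sqrt_1.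
Qed.

Lemma Rpower_comb X s : 0 < X -> Rpower X (- (2 * (1 + s))) * Rpower X (2 * s) = / (X * X).
Proof.
  intros HX. rewrite <- Rpower_plus.
  replace (- (2 * (1 + s)) + 2 * s) with (- INR 2) by (simpl; ring).
  rewrite Rpower_Ropp, Rpower_pow by auto. simpl. f_equal; ring.
Qed.

Definition w2 (sg : R) (k k1 : Z) : R :=
  if Z.eq_dec k1 0 then 0 else if Z.eq_dec (k - k1) 0 then 0
  else Rpower (Rabs (IZR k1)) (- (2 * sg)) * Rpower (Rabs (IZR (k - k1))) (- (2 * sg)).

Lemma w2_nonneg sg k k1 : 0 <= w2 sg k k1.
Proof. unfold w2. destruct Z.eq_dec; [lra|]. destruct Z.eq_dec; [lra|].
  pose proof (Rpower_pos (Rabs (IZR k1)) (- (2 * sg))). pose proof (Rpower_pos (Rabs (IZR (k - k1))) (- (2 * sg))). nra. Qed.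

Lemma hterm_nonneg s v k : 0 <= hterm s v k.
Proof. unfold hterm. destruct Z.eq_dec; [lra|]. pose proof (Rpower_pos (Rabs (IZR k)) (2 * s)).
  pose proof (pow2_ge_0 (Cmod (v k))). nra. Qed.

Lemma P1 s t u v k k1 :
  Cmod (b2term t u v k k1) ^ 2 = w2 (1 + s) k k1 * (hterm s u k1 * hterm s v (k - k1)).
Proof.
  unfold b2term, w2, hterm. cbv zeta.
  destruct (Z.eq_dec k1 0) as [E|E].
  { rewrite Cmod_R, Rabs_R0. ring. }
  destruct (Z.eq_dec (k - k1) 0) as [E2|E2].
  { rewrite Cmod_R, Rabs_R0. ring. }
  assert (H1 := IZR_abs_ge1 _ E). assert (H2 := IZR_abs_ge1 _ E2).
  rewrite Cmod_div.
  2:{ intros Hc. apply (f_equal fst) in Hc. simpl in Hc.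
      apply Rmult_integral in Hc. destruct Hc as [Hc|Hc]; apply eq_IZR_R0 in Hc; lia. }
  rewrite !Cmod_mult, Cmod_Cexpi, Cmod_R, Rabs_mult.
  set (X := Rabs (IZR k1)) in *. set (Y := Rabs (IZR (k - k1))) in *.
  replace (Rpower X (- (2 * (1 + s))) * Rpower Y (- (2 * (1 + s))) *
    (Rpower X (2 * s) * Cmod (u k1) ^ 2 * (Rpower Y (2 * s) * Cmod (v (k - k1)%Z) ^ 2)))
   with ((Rpower X (- (2 * (1 + s))) * Rpower X (2 * s)) * (Rpower Y (- (2 * (1 + s))) * Rpower Y (2 * s)) *
         (Cmod (u k1) ^ 2 * Cmod (v (k - k1)%Z) ^ 2)) by ring.
  rewrite !Rpower_comb by lra. field. lra.
Qed.

Lemma cmod_zsum (b : Z -> C) : zsummable (fun k => Cmod (b k)) ->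
  Cmod (zsum (fun k => fst (b k)), zsum (fun k => snd (b k))) <= zsum (fun k => Cmod (b k)).
Proof.
  intros Hb.
  assert (Hf : zsummable (fun k => fst (b k))).
  { apply (zsummable_le _ _ (fun k => re_le_Cmod (b k)) Hb). }
  assert (Hs : zsummable (fun k => snd (b k))).
  { apply (zsummable_le _ (fun k => Cmod (b k))); auto. intros k.
    pose proof (Rmax_Cmod (b k)). pose proof (Rmax_r (Rabs (fst (b k))) (Rabs (snd (b k)))). lra. }
  set (X := zsum (fun k => fst (b k))). set (Y := zsum (fun k => snd (b k))).
  set (Zc := zsum (fun k => Cmod (b k))).
  unfold Cmod at 1. simpl fst; simpl snd.
  set (r := sqrt (X ^ 2 + Y ^ 2)).
  assert (Hr : r ^ 2 = X ^ 2 + Y ^ 2) by (unfold r; rewrite pow2_sqrt; nra).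
  assert (E : X ^ 2 + Y ^ 2 = zsum (fun k => X * fst (b k) + Y * snd (b k))).
  { rewrite zsum_plus, !zsum_scal. fold X Y. ring. apply zsummable_scal; auto. apply zsummable_scal; auto. }
  assert (Le : zsum (fun k => X * fst (b k) + Y * snd (b k)) <= zsum (fun k => r * Cmod (b k))).
  { apply zsum_le.
    - apply zsummable_plus; apply zsummable_scal; auto.
    - apply zsummable_scal; auto.
    - intros k. unfold r, Cmod. apply cs2. }
  rewrite zsum_scal in Le. fold Zc in Le.
  assert (0 <= r) by apply sqrt_pos.
  assert (0 <= Zc) by (apply zsum_nonneg; auto; intros; apply Cmod_ge_0).
  nra.
Qed.

Lemma gz_even q n : gz q (- n) = gz q n.
Proof. unfold gz. destruct (Z.eq_dec (-n) 0), (Z.eq_dec n 0); try lia; auto.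
  rewrite opp_IZR, Rabs_Ropp. reflexivity. Qed.

Lemma term_le_zsum g j : (forall k, 0 <= g k) -> zsummable g -> g j <= zsum g.
Proof. intros Hg Hs. pose proof (FS_le_zsum g j 1 Hg Hs). simpl in H. lra. Qed.

Lemma P2 s alpha k k1 : 0 <= s + alpha -> alpha < 1 -> k <> 0%Z ->
  Rpower (Rabs (IZR k)) (2 * (s + alpha)) * w2 (1 + s) k k1 <=
  Rpower 2 (2 * (s + alpha)) * (gz (4 * (1 - alpha)) k1 + gz (4 * (1 - alpha)) (k - k1)).
Proof.
  intros Hb Ha Hk. unfold w2, gz.
  destruct (Z.eq_dec k1 0) as [E|E].
  { pose proof (Rpower_pos 2 (2 * (s + alpha))).
    destruct (Z.eq_dec (k - k1) 0); [nra|]. pose proof (Rpower_pos (Rabs (IZR (k - k1))) (- (4 * (1 - alpha)))). nra. }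
  destruct (Z.eq_dec (k - k1) 0) as [E2|E2].
  { pose proof (Rpower_pos 2 (2 * (s + alpha))). pose proof (Rpower_pos (Rabs (IZR k1)) (- (4 * (1 - alpha)))). nra. }
  replace (1 + s) with ((1 - alpha) + (s + alpha)) by ring.
  apply p2_real; try apply IZR_abs_ge1; auto; try lra.
  - pose proof (IZR_abs_ge1 _ Hk); lra.
  - replace (IZR k) with (IZR k1 + IZR (k - k1)) by (rewrite minus_IZR; ring). apply Rabs_triang.
Qed.

Theorem lemma7p4 (s alpha : R) (Hsa : 0 <= s + alpha) (Ha : alpha < 3 / 4)
  (Hs : -3 / 4 < s) :
  exists c : R, 0 <= c /\
    forall (t : R) (u v : Z -> C), In_Hs s u -> In_Hs s v ->
      (forall k : Z, k <> 0%Z -> zsummable (fun k1 => Cmod (b2term t u v k k1))) /\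
      In_Hs (s + alpha) (B2 t u v) /\
      Hnorm (s + alpha) (B2 t u v) <= c * Hnorm s u * Hnorm s v.
Proof.
  set (q := 4 * (1 - alpha)).
  destruct (gz_summable q ltac:(unfold q; lra)) as [Zs _].
  set (Zg := zsum (gz q)).
  assert (HZg : 0 <= Zg) by (apply zsum_nonneg; auto; apply gz_nonneg).
  set (K := Rpower 2 (2 * (s + alpha))).
  assert (HK : 0 < K) by apply Rpower_pos.
  set (M := K * (Zg + Zg)).
  assert (HM : 0 <= M) by (unfold M; nra).
  exists (sqrt M). split; [apply sqrt_pos|].
  intros t u v Hu Hv.
  set (hu := hterm s u). set (hv := hterm s v).
  assert (hu0 : forall k, 0 <= hu k) by (intros; apply hterm_nonneg).
  assert (hv0 : forall k, 0 <= hv k) by (intros; apply hterm_nonneg).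
  set (Nu := zsum hu). set (Nv := zsum hv).
  assert (HNu : 0 <= Nu) by (apply zsum_nonneg; auto).
  assert (HNv : 0 <= Nv) by (apply zsum_nonneg; auto).
  assert (hvN : forall j, hv j <= Nv) by (intros; apply term_le_zsum; auto).
  assert (Gsh : forall k, zsummable (fun k1 => gz q (k - k1)) /\ zsum (fun k1 => gz q (k - k1)) <= Zg).
  { intros k. destruct (zsum_shift (gz q) (- k) (gz_nonneg q) Zs) as [S1 S2].
    assert (Ee : forall k1, gz q (k1 + - k)%Z = gz q (k - k1)%Z).
    { intros k1. rewrite <- gz_even. f_equal. lia. }
    split. eapply zsummable_ext; [exact Ee| exact S1].
    rewrite <- (zsum_ext _ _ Ee). exact S2. }
  assert (Bnd_s : forall k, zsummable (fun k1 => K * (gz q k1 + gz q (k - k1)))).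
  { intros k. apply zsummable_scal, zsummable_plus; auto. apply Gsh. }
  assert (Bnd_z : forall k, zsum (fun k1 => K * (gz q k1 + gz q (k - k1))) <= M).
  { intros k. rewrite zsum_scal, zsum_plus; auto; [|apply Gsh]. unfold M.
    apply Rmult_le_compat_l; [lra|]. fold Zg. pose proof (proj2 (Gsh k)). lra. }
  assert (Pw : forall k k1, k <> 0%Z -> Rpower (Rabs (IZR k)) (2 * (s + alpha)) * w2 (1 + s) k k1 <= K * (gz q k1 + gz q (k - k1))).
  { intros; apply P2; auto; lra. }
  assert (Pk1 : forall k, k <> 0%Z -> 1 <= Rpower (Rabs (IZR k)) (2 * (s + alpha))).
  { intros k Hk. rewrite <- (Rpower_O (Rabs (IZR k))) by (pose proof (IZR_abs_ge1 _ Hk); lra).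
    apply Rle_Rpower; [apply IZR_abs_ge1; auto| lra]. }
  assert (Ws : forall k, k <> 0%Z -> zsummable (w2 (1 + s) k) /\
            zsummable (fun k1 => Rpower (Rabs (IZR k)) (2 * (s + alpha)) * w2 (1 + s) k k1) /\
            Rpower (Rabs (IZR k)) (2 * (s + alpha)) * zsum (w2 (1 + s) k) <= M).
  { intros k Hk. pose proof (Pk1 k Hk).
    assert (S2 : zsummable (fun k1 => Rpower (Rabs (IZR k)) (2 * (s + alpha)) * w2 (1 + s) k k1)).
    { apply (zsummable_le _ _ ) with (2 := Bnd_s k). intros k1.
      rewrite Rabs_pos_eq; [apply Pw; auto|]. pose proof (w2_nonneg (1+s) k k1). nra. }
    split; [|split; auto].
    - apply (zsummable_le _ _ ) with (2 := Bnd_s k). intros k1.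
      rewrite Rabs_pos_eq by apply w2_nonneg. eapply Rle_trans; [|apply (Pw k k1 Hk)].
      pose proof (w2_nonneg (1+s) k k1). nra.
    - rewrite <- zsum_scal. eapply Rle_trans; [|apply (Bnd_z k)]. apply zsum_le; auto. }
  set (hk := fun k k1 => hu k1 * hv (k - k1)%Z).
  assert (Hs_ : forall k, zsummable (hk k)).
  { intros k. apply (zsummable_le _ (fun k1 => Nv * hu k1)); [|apply zsummable_scal; exact Hu].
    intros k1. unfold hk. rewrite Rabs_pos_eq by (apply Rmult_le_pos; auto).
    specialize (hu0 k1); specialize (hvN (k - k1)%Z); nra. }
  assert (Hk0 : forall k, 0 <= zsum (hk k)).
  { intros; apply zsum_nonneg; auto. intros; unfold hk; apply Rmult_le_pos; auto. }
  assert (Pt : forall k k1 l, 0 < l -> Cmod (b2term t u v k k1) <= l / 2 * w2 (1 + s) k k1 + hk k k1 / (2 * l)).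
  { intros k k1 l Hl. apply amgm_sq; auto. apply Cmod_ge_0. apply w2_nonneg.
    unfold hk; apply Rmult_le_pos; auto. apply P1. }
  assert (C1 : forall k : Z, k <> 0%Z -> zsummable (fun k1 => Cmod (b2term t u v k k1))).
  { intros k Hk. destruct (Ws k Hk) as [W1 _].
    apply (zsummable_le _ (fun k1 => 1 / 2 * w2 (1 + s) k k1 + hk k k1 / (2 * 1))).
    - intros k1. rewrite Rabs_pos_eq by apply Cmod_ge_0. apply Pt; lra.
    - apply zsummable_plus. apply zsummable_scal; auto.
      eapply zsummable_ext; [| apply (zsummable_scal (/ (2 * 1)) _ (Hs_ k))].
      intros; simpl; unfold Rdiv; ring. }
  assert (Tk : forall k, hterm (s + alpha) (B2 t u v) k <= M * zsum (hk k)).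
  { intros k. unfold hterm. destruct (Z.eq_dec k 0) as [E|E]; [specialize (Hk0 k); nra|].
    destruct (Ws k E) as [W1 [W2 W3]].
    set (P := Rpower (Rabs (IZR k)) (2 * (s + alpha))). fold P in W2, W3.
    set (Zk := zsum (fun k1 => Cmod (b2term t u v k k1))).
    assert (HZk : 0 <= Zk) by (apply zsum_nonneg; auto; intros; apply Cmod_ge_0).
    assert (CB : Cmod (B2 t u v k) <= Zk) by (apply (cmod_zsum (b2term t u v k)); auto).
    assert (CS : Zk ^ 2 <= zsum (w2 (1 + s) k) * zsum (hk k)).
    { apply cs_real; auto. apply zsum_nonneg; auto; apply w2_nonneg.
      intros l Hl. unfold Zk. 
      assert (E1 : l / 2 * zsum (w2 (1 + s) k) + zsum (hk k) / (2 * l) =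
                   zsum (fun k1 => l / 2 * w2 (1 + s) k k1 + / (2 * l) * hk k k1)).
      { rewrite zsum_plus, !zsum_scal. unfold Rdiv; ring. apply zsummable_scal; auto. apply zsummable_scal; auto. }
      rewrite E1. apply zsum_le; auto.
      - apply zsummable_plus; apply zsummable_scal; auto.
      - intros k1. pose proof (Pt k k1 l Hl). unfold Rdiv in *. lra. }
    assert (0 < P) by apply Rpower_pos.
    assert (Cmod (B2 t u v k) ^ 2 <= Zk ^ 2) by (pose proof (Cmod_ge_0 (B2 t u v k)); nra).
    apply Rle_trans with (P * (zsum (w2 (1 + s) k) * zsum (hk k))).
    { apply Rmult_le_compat_l; lra. }
    rewrite <- Rmult_assoc. apply Rmult_le_compat_r; auto. }
  assert (PSb : forall N, PS (hterm (s + alpha) (B2 t u v)) N <= M * (Nu * Nv)).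
  { intros N. unfold PS. set (m := (- Z.of_nat (S N))%Z). set (L := (S N + S N)%nat).
    eapply Rle_trans; [apply FS_le; exact Tk|]. rewrite FS_scal.
    apply Rmult_le_compat_l; auto.
    destruct (zsum_FS hk m L Hs_) as [F1 F2]. rewrite <- F2.
    apply Rle_trans with (zsum (fun k1 => Nv * hu k1)).
    - apply zsum_le; auto. apply zsummable_scal; exact Hu.
      intros k1. unfold hk.
      rewrite (FS_scal (hu k1) (fun k => hv (k - k1)%Z)).
      rewrite (FS_ext (fun k => hv (k - k1)%Z) (fun k => hv (k + - k1)%Z)) by (intros; f_equal; lia).
      rewrite FS_shift. pose proof (FS_le_zsum hv (m + - k1) L hv0 Hv). specialize (hu0 k1). fold Nv in H. nra.
    - rewrite zsum_scal. fold Nu. lra. }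
  destruct (zsum_bound _ _ (fun k => hterm_nonneg _ _ k) PSb) as [I1 I2].
  split; [exact C1|]. split; [exact I1|].
  unfold Hnorm. fold hu hv. fold Nu Nv.
  rewrite <- (sqrt_mult M Nu) by auto.
  rewrite <- (sqrt_mult (M * Nu) Nv) by (try apply Rmult_le_pos; auto).
  apply sqrt_le_1_alt. rewrite <- Rmult_assoc in I2. exact I2.
Qed.
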